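(* Let $R$ be a finite commutative ring with Jacobson radical $\mathcal{J}$, let $I\subseteq\mathcal{J}$ be an ideal, let $n\ge1$, and let $K$ be a field of characteristic zero. Then the natural map induces an isomorphism of $\mathrm{GL}_n(R)$-representations $$\mathrm{St}^K_n(R)^{\Gamma_n(I)}\cong\mathrm{St}^K_n(R/I).$$
   Context: A flag in $R^n$ is a chain $0\subsetneq V_1\subsetneq\cdots\subsetneq V_k\subsetneq R^n$ of free direct summands; complete if $k=n-1$, good if it is a subflag of a complete flag. The Tits complex $\mathcal{T}_n(R)$ has as vertices the direct summands $V$ of $R^n$, $0\ne V\ne R^n$, with $V$ and $R^n/V$ free, and a $k$-simplex for every good flag with $k+1$ terms; $\mathrm{GL}_n(R)$ acts on it. $\mathrm{St}^K_n(R)=\tilde H_{n-2}(\mathcal{T}_n(R);K)$, a $\mathrm{GL}_n(R)$-representation. The map $R\to R/I$ induces (via $V\mapsto V\otimes_R R/I$) an equivariant simplicial map $\mathcal{T}_n(R)\to\mathcal{T}_n(R/I)$, hence $\mathrm{St}^K_n(R)\to \mathrm{St}^K_n(R/I)$, where $\mathrm{GL}_n(R)$ acts on the target through $\mathrm{GL}_n(R)\to\mathrm{GL}_n(R/I)$. $\Gamma_n(I)=\ker(\mathrm{GL}_n(R)\to\mathrm{GL}_n(R/I))$, and $(\cdot)^{\Gamma_n(I)}$ denotes invariants. *)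

(* Defs.v *)
From HB Require Import structures.
From mathcomp Require Import all_boot all_order all_algebra.
Set Implicit Arguments. Unset Strict Implicit. Unset Printing Implicit Defensive.
Import GRing.Theory.
Local Open Scope ring_scope.

Section Defs.
Variable R : finComPzRingType.

Definition is_ideal (I : {set R}) : Prop :=
  0 \in I /\ (forall x y, x \in I -> y \in I -> x + y \in I) /\
  (forall r x, x \in I -> r * x \in I).

Definition is_maximal_ideal (I : {set R}) : Prop :=
  is_ideal I /\ 1 \notin I /\
  (forall J : {set R}, is_ideal J -> I \subset J -> J = I \/ 1 \in J).

Definition in_jacobson (x : R) : Prop :=
  forall M : {set R}, is_maximal_ideal M -> x \in M.

Variable n : nat.
Notation V := 'cV[R]_n.

Definition is_submodule (A : {set V}) : Prop :=
  0 \in A /\ (forall x y, x \in A -> y \in A -> x + y \in A) /\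
  (forall (r : R) x, x \in A -> r *: x \in A).

(* [free_mod A B]: the module A/B is free, i.e. there are b_1..b_k in A
   whose classes modulo B form a basis of A/B.  With B = 0 this says A is
   free; with A = R^n it says R^n/B is free. *)
Definition free_mod (A B : {set V}) : Prop :=
  exists (k : nat) (b : 'I_k -> V),
    (forall i, b i \in A) /\
    (forall x, x \in A -> exists (a : 'I_k -> R) (y : V),
        y \in B /\ x = \sum_i a i *: b i + y) /\
    (forall a : 'I_k -> R, \sum_i a i *: b i \in B -> forall i, a i = 0).

Definition is_direct_summand (A : {set V}) : Prop :=
  exists W : {set V}, is_submodule W /\ A :&: W = [set 0] /\
    (forall x : V, exists y z, y \in A /\ z \in W /\ x = y + z).

Definition tits_vertex (A : {set V}) : Prop :=
  [/\ is_submodule A, A != [set 0], A != setT, is_direct_summand A &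
      (free_mod A [set 0] /\ free_mod setT A)].

Definition is_flag (s : seq {set V}) : Prop :=
  (forall A, A \in s -> tits_vertex A) /\ sorted (fun A B : {set V} => A \proper B) s.

Definition is_complete_flag (s : seq {set V}) : Prop :=
  is_flag s /\ size s = n.-1.

Definition is_good_flag (s : seq {set V}) : Prop :=
  is_flag s /\ exists c, is_complete_flag c /\ subseq s c.

(* ---------- augmented simplicial chain complex with coefficients in K ----
   A (m-1)-simplex is an m-term good flag, naturally oriented by inclusion;
   C_{m-1} consists of functions on m-tuples supported on good flags; the
   size-0 tuple (empty flag) gives C_{-1} = K (augmentation). *)
Variable K : fieldType.

Definition supported (m : nat) (c : m.-tuple {set V} -> K) : Prop :=
  forall s : m.-tuple {set V}, c s != 0 -> (m == 0)%N \/ is_good_flag s.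

Definition face (i : nat) (s : seq {set V}) : seq {set V} :=
  take i s ++ drop i.+1 s.

(* boundary C_{m-1} -> C_{m-2} (zero for m = 0, as C_{-2} = 0) *)
Definition bd (m : nat) (c : m.-tuple {set V} -> K)
    (t : m.-1.-tuple {set V}) : K :=
  \sum_(s : m.-tuple {set V}) \sum_(i < m)
     (if face i s == t :> seq _ then (-1) ^+ i * c s else 0).

Definition is_cycle (m : nat) (c : m.-tuple {set V} -> K) : Prop :=
  supported c /\ forall t, bd c t = 0.

Definition is_boundary (m : nat) (c : m.-tuple {set V} -> K) : Prop :=
  exists d : m.+1.-tuple {set V} -> K,
    supported d /\ forall t : m.-tuple {set V}, c t = bd d t.

Definition invertible (g : 'M[R]_n) : Prop :=
  exists h : 'M[R]_n, g *m h = 1%:M /\ h *m g = 1%:M.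

Definition act (g : 'M[R]_n) (A : {set V}) : {set V} :=
  [set g *m v | v in A].
End Defs.

Definition push (R1 R2 : finComPzRingType) (n : nat) (K : fieldType) (m : nat)
    (phi : {set 'cV[R1]_n} -> {set 'cV[R2]_n})
    (c : m.-tuple {set 'cV[R1]_n} -> K) (t : m.-tuple {set 'cV[R2]_n}) : K :=
  \sum_(s : m.-tuple {set 'cV[R1]_n} | map phi s == t :> seq _) c s.

(* V |-> V (x)_R S, realized as the image of V in S^n *)
Definition reduce (R1 R2 : finComPzRingType) (f : {rmorphism R1 -> R2}) (n : nat)
    (A : {set 'cV[R1]_n}) : {set 'cV[R2]_n} :=
  [set map_mx f v | v in A].

(* Main.v *)
Require Import Defs.
From Stdlib Require Import Classical ClassicalEpsilon.
From HB Require Import structures.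
From mathcomp Require Import all_boot all_order all_algebra zify.
Set Implicit Arguments. Unset Strict Implicit. Unset Printing Implicit Defensive.
Import GRing.Theory.
Local Open Scope ring_scope.


Definition Ymat (T : comPzRingType) n (X : 'M[T]_n) (k : 'I_n) (w : 'cV[T]_n) : 'M[T]_n :=
  \matrix_(r, s) (if (s < k)%N then X r s else if s == k then w r 0 else (r == s)%:R).
Definition Umat (T : comPzRingType) n (Xi : 'M[T]_n) (k : 'I_n) (y : 'rV[T]_n) : 'M[T]_n :=
  \matrix_(r, s) (if (r < k)%N then Xi r s else if r == k then y 0 s else (r == s)%:R).

Lemma detY_lin (T : comPzRingType) n (X : 'M[T]_n) k w :
  \det (Ymat X k w) = \sum_r w r 0 * cofactor (Ymat X k 0) r k.
Proof.
rewrite (expand_det_col _ k); apply: eq_bigr => r _.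
rewrite mxE ltnn eqxx; congr (_ * _).
rewrite /cofactor; congr (_ * \det _).
by apply/matrixP => a b; rewrite !mxE eq_sym (negbTE (neq_lift _ _)).
Qed.

Lemma detU_lin (T : comPzRingType) n (Xi : 'M[T]_n) k y :
  \det (Umat Xi k y) = \sum_s y 0 s * cofactor (Umat Xi k 0) k s.
Proof.
rewrite (expand_det_row _ k); apply: eq_bigr => s _.
rewrite mxE ltnn eqxx; congr (_ * _).
rewrite /cofactor; congr (_ * \det _).
by apply/matrixP => a b; rewrite !mxE eq_sym (negbTE (neq_lift _ _)).
Qed.

Lemma sum_delta (T : pzSemiRingType) n (i : 'I_n) (F : 'I_n -> T) :
  \sum_l ((l == i)%:R * F l) = F i.
Proof.
rewrite (bigD1 i) //= eqxx mul1r big1 ?addr0 // => l /negbTE ->; by rewrite mul0r.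
Qed.

Lemma sum_delta' (T : pzSemiRingType) n (i : 'I_n) (F : 'I_n -> T) :
  \sum_l ((i == l)%:R * F l) = F i.
Proof. by under eq_bigr do rewrite eq_sym; apply: sum_delta. Qed.

Lemma oltF n (r s : 'I_n) : (r < s)%N -> (r == s) = false.
Proof. by move=> rs; apply/eqP => e; move: rs; rewrite e ltnn. Qed.
Lemma ogtF n (r s : 'I_n) : (s < r)%N -> (r == s) = false.
Proof. by move=> rs; apply/eqP => e; move: rs; rewrite e ltnn. Qed.

Lemma prod_diag (T : comPzRingType) n (X Xi : 'M[T]_n) (k i : 'I_n) :
  Xi *m X = 1%:M ->
  (forall a b : 'I_n, (b < k)%N -> (k < a)%N -> X a b = 0) ->
  (i <= k)%N ->
  \det (Umat Xi k (delta_mx 0 i)) * \det (Ymat X k (delta_mx i 0))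
    = 1 - \sum_(l < n | (l < k)%N) X i l * Xi l i.
Proof.
move=> XiX hX lik.
have XiXe : forall a b, \sum_l Xi a l * X l b = (a == b)%:R.
  by move=> a b; have := congr1 (fun M : 'M[T]_n => M a b) XiX; rewrite !mxE.
rewrite -det_mulmx.
set Y := Ymat X k (delta_mx i 0).
set P := Umat Xi k (delta_mx 0 i) *m Y.
have Ye : forall l s, Y l s = if (s < k)%N then X l s else if s == k then (l == i)%:R
                               else (l == s)%:R.
  by move=> l s; rewrite /Y mxE mxE /= eqxx andbT.
have Plt : forall r s : 'I_n, (r < k)%N -> P r s = \sum_l Xi r l * Y l s.
  by move=> r s rk; rewrite mxE; apply: eq_bigr => l _; rewrite mxE rk.
have Pk : forall s, P k s = Y i s.
  move=> s; rewrite mxE -(sum_delta i (fun l => Y l s)); apply: eq_bigr => l _.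
  by rewrite mxE ltnn eqxx mxE /=.
have Pgt : forall r s : 'I_n, (k < r)%N -> P r s = Y r s.
  move=> r s kr; rewrite mxE -(sum_delta' r (fun l => Y l s)); apply: eq_bigr => l _.
  rewrite mxE ltnNge (ltnW kr) /= ifN //; apply/eqP => rk; move: kr; rewrite rk ltnn //.
pose Ainv : 'M[T]_n := \matrix_(r, s) ((r == s)%:R - (if (r == k) && (s < k)%N then X i s else 0)).
have dA : \det Ainv = 1.
  rewrite det_trig; last first.
    apply/is_trig_mxP => r s rs; rewrite mxE (oltF rs) sub0r.
    case: eqP => [rk|] /=; last by rewrite oppr0.
    by rewrite -rk ltnNge (ltnW rs) oppr0.
  rewrite big1 // => r _; rewrite mxE eqxx.
  by case: eqP => [->|]; rewrite ?ltnn ?andbF /= subr0.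
set B := Ainv *m P.
have Be : forall r s : 'I_n, B r s = P r s - (if r == k then \sum_(l < n | (l < k)%N) X i l * P l s else 0).
  move=> r s; rewrite mxE.
  under eq_bigr do rewrite mxE mulrBl.
  rewrite sumrB sum_delta'; congr (_ - _).
  case: eqP => _ /=; last by rewrite big1 // => l _; rewrite mul0r.
  by rewrite [RHS]big_mkcond; apply: eq_bigr => l _; case: ifP; rewrite ?mul0r.
have dB : \det B = \det P by rewrite det_mulmx dA mul1r.
rewrite -dB -det_tr det_trig; last first.
  apply/is_trig_mxP => s r sr; rewrite mxE Be.
  case: (ltngtP r k) => [rk|kr|rk].
  - rewrite (oltF rk) subr0 Plt //.
    under eq_bigr do rewrite Ye (ltn_trans sr rk).
    by rewrite XiXe (ogtF sr).
  - rewrite (ogtF kr) subr0 Pgt // Ye.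
    case: ifP => [sk|_]; first by apply: hX.
    case: eqP => [sk|_]; first by rewrite (ogtF (leq_ltn_trans lik kr)).
    by rewrite (ogtF sr).
  - have rkE : r = k by apply: val_inj.
    subst r; rewrite eqxx Pk Ye sr.
    rewrite (eq_bigr (fun l => X i l * (l == s)%:R)); last first.
      move=> l lk; rewrite Plt //.
      under eq_bigr do rewrite Ye sr.
      by rewrite XiXe.
    rewrite (bigD1 s) ?sr //= eqxx mulr1 big1 ?addr0 ?subrr //.
    by move=> l /andP [_ /negbTE ->]; rewrite mulr0.
rewrite (bigD1 k) //= big1 ?mulr1; last first.
  move=> r rk; rewrite mxE Be (negbTE rk) subr0.
  case: (ltngtP r k) => [rlt|kr|rk']; last by move: rk; rewrite (val_inj rk') eqxx.
  - rewrite Plt //; under eq_bigr do rewrite Ye rlt.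
    by rewrite XiXe eqxx.
  - by rewrite Pgt // Ye ltnNge (ltnW kr) /= (ogtF kr) eqxx.
rewrite mxE Be eqxx Pk Ye ltnn eqxx eqxx; congr (_ - _).
apply: eq_bigr => l lk; rewrite Plt //.
under eq_bigr do rewrite Ye ltnn eqxx.
by congr (_ * _); rewrite -(sum_delta i (fun l' => Xi l l')); apply: eq_bigr => l' _; rewrite mulrC.
Qed.

Lemma step_exists (T : comPzRingType) n (X Xi : 'M[T]_n) (k : 'I_n) :
  Xi *m X = 1%:M ->
  (forall a b : 'I_n, (b < k)%N -> (k < a)%N -> X a b = 0) ->
  exists w : 'cV[T]_n, (forall r : 'I_n, (k < r)%N -> w r 0 = 0) /\
                       \det (Ymat X k w) = 1.
Proof.
move=> XiX hX.
have XiXe : forall a b, \sum_l Xi a l * X l b = (a == b)%:R.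
  by move=> a b; have := congr1 (fun M : 'M[T]_n => M a b) XiX; rewrite !mxE.
pose z r := cofactor (Ymat X k 0) r k.
pose c s := cofactor (Umat Xi k 0) k s.
have cz : forall r : 'I_n, (r <= k)%N -> c r * z r = 1 - \sum_(l < n | (l < k)%N) X r l * Xi l r.
  move=> r rk; rewrite -prod_diag // detY_lin detU_lin.
  congr (_ * _).
    by rewrite -[c r](sum_delta r c); apply: eq_bigr => s _; rewrite mxE eqxx.
  by rewrite -[z r](sum_delta r z); apply: eq_bigr => s _; rewrite mxE eqxx andbT.
exists (\col_r (if (r <= k)%N then c r else 0)); split.
  by move=> r kr; rewrite mxE leqNgt kr.
rewrite detY_lin.
rewrite (eq_bigr (fun r : 'I_n => if (r <= k)%N then c r * z r else 0)); last first.
  by move=> r _; rewrite mxE; case: ifP; rewrite ?mul0r.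
rewrite -big_mkcond /=.
rewrite (eq_bigr _ cz) sumrB.
have -> : \sum_(r < n | (r <= k)%N) \sum_(l < n | (l < k)%N) X r l * Xi l r
          = \sum_(l < n | (l < k)%N) (1 : T).
  rewrite exchange_big /=; apply: eq_bigr => l lk.
  transitivity (\sum_r Xi l r * X r l); last by rewrite XiXe eqxx.
  rewrite [RHS](bigID (fun r : 'I_n => (r <= k)%N)) /=.
  rewrite [X in _ = _ + X]big1 ?addr0; last first.
    by move=> r; rewrite -ltnNge => kr; rewrite hX // mulr0.
  by apply: eq_bigr => r _; rewrite mulrC.
rewrite (bigD1 k) //=.
rewrite (eq_bigl (fun r : 'I_n => (r < k)%N)); first by rewrite addrK.
by move=> r; rewrite ltn_neqAle andbC; congr (_ && _).
Qed.


Lemma invt_right (T : finComPzRingType) n (P Q : 'M[T]_n) : P *m Q = 1%:M -> invertible P.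
Proof. by move=> PQ; exists Q; split => //; apply: mulmx1C. Qed.

Lemma invt_det (T : finComPzRingType) n (P : 'M[T]_n) e : \det P * e = 1 -> invertible P.
Proof.
move=> de; apply: (@invt_right _ _ _ (e *: \adj P)).
by rewrite -scalemxAr mul_mx_adj scale_scalar_mx mulrC de.
Qed.

Lemma det_invt (T : finComPzRingType) n (P : 'M[T]_n) : invertible P -> exists e, \det P * e = 1.
Proof. by case=> Q [PQ _]; exists (\det Q); rewrite -det_mulmx PQ det1. Qed.

Lemma invtM (T : finComPzRingType) n (P Q : 'M[T]_n) : invertible P -> invertible Q -> invertible (P *m Q).
Proof.
case=> P' [PP' _] [Q' [QQ' _]]; apply: (@invt_right _ _ _ (Q' *m P')).
by rewrite mulmxA -(mulmxA P) QQ' mulmx1 PP'.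
Qed.

Lemma invt1 (T : finComPzRingType) n : invertible (1%:M : 'M[T]_n).
Proof. by exists 1%:M; rewrite mulmx1. Qed.

Lemma mulmx_inj (T : finComPzRingType) n m (P : 'M[T]_n) : invertible P ->
  injective (fun v : 'M[T]_(n, m) => P *m v).
Proof.
case=> Q [_ QP] u v /= e; by rewrite -(mul1mx u) -(mul1mx v) -QP -!mulmxA e.
Qed.

Lemma act_mul (T : finComPzRingType) n (P Q : 'M[T]_n) (A : {set 'cV[T]_n}) : act (P *m Q) A = act P (act Q A).
Proof.
rewrite /act -imset_comp; apply: eq_imset => v /=; by rewrite mulmxA.
Qed.

Lemma act1 (T : finComPzRingType) n (A : {set 'cV[T]_n}) : act 1%:M A = A.
Proof.
apply/setP => v; apply/imsetP/idP => [[u uA ->]|vA]; first by rewrite mul1mx.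
by exists v; rewrite ?mul1mx.
Qed.

Lemma card_act (T : finComPzRingType) n (P : 'M[T]_n) (A : {set 'cV[T]_n}) : invertible P -> #|act P A| = #|A|.
Proof. by move=> iP; rewrite card_imset //; apply: mulmx_inj. Qed.

Lemma mem_act (T : finComPzRingType) n (P : 'M[T]_n) (A : {set 'cV[T]_n}) v : v \in A -> P *m v \in act P A.
Proof. by move=> vA; apply/imsetP; exists v. Qed.

Lemma mem_actP (T : finComPzRingType) n (P : 'M[T]_n) (A : {set 'cV[T]_n}) x :
  reflect (exists2 v, v \in A & x = P *m v) (x \in act P A).
Proof. exact: imsetP. Qed.

Lemma act_inv (T : finComPzRingType) n (P Q : 'M[T]_n) (A : {set 'cV[T]_n}) : Q *m P = 1%:M -> act Q (act P A) = A.
Proof. by move=> QP; rewrite -act_mul QP act1. Qed.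

Lemma act_injS (T : finComPzRingType) n (P : 'M[T]_n) (A B : {set 'cV[T]_n}) : invertible P ->
  act P A = act P B -> A = B.
Proof. by case=> Q [_ QP] e; rewrite -(act_inv A QP) -(act_inv B QP) e. Qed.

Lemma act_subset (T : finComPzRingType) n (P : 'M[T]_n) (A B : {set 'cV[T]_n}) :
  A \subset B -> act P A \subset act P B.
Proof. exact: imsetS. Qed.

Lemma act_subsetE (T : finComPzRingType) n (P : 'M[T]_n) (A B : {set 'cV[T]_n}) :
  invertible P -> (act P A \subset act P B) = (A \subset B).
Proof.
move=> iP; apply/idP/idP; last exact: act_subset.
case: (iP) => Q [_ QP] sub; rewrite -(act_inv A QP) -(act_inv B QP); exact: act_subset.
Qed.

Lemma act_properE (T : finComPzRingType) n (P : 'M[T]_n) (A B : {set 'cV[T]_n}) :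
  invertible P -> (act P A \proper act P B) = (A \proper B).
Proof. by move=> iP; rewrite /proper !act_subsetE. Qed.

Lemma act_setT (T : finComPzRingType) n (P : 'M[T]_n) : invertible P -> act P setT = setT.
Proof.
move=> iP; apply/eqP; by rewrite eqEcard subsetT card_act // leqnn.
Qed.

Lemma act_set0 (T : finComPzRingType) n (P : 'M[T]_n) : act P [set 0] = [set 0].
Proof. by rewrite /act imset_set1 mulmx0. Qed.

Definition E (T : finComPzRingType) n (k : nat) : {set 'cV[T]_n} :=
  [set v : 'cV[T]_n | [forall i : 'I_n, (k <= i)%N ==> (v i 0 == 0)]].

Lemma memEP (T : finComPzRingType) n k (v : 'cV[T]_n) :
  reflect (forall i : 'I_n, (k <= i)%N -> v i 0 = 0) (v \in E T n k).
Proof.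
rewrite inE; apply: (iffP forallP) => [h i ki|h i]; first by move/implyP/(_ ki)/eqP: (h i).
by apply/implyP => ki; rewrite h.
Qed.

Lemma E0 (T : finComPzRingType) n : E T n 0 = [set 0].
Proof.
apply/setP => v; rewrite in_set1; apply/memEP/eqP => [h|->]; last by move=> i _; rewrite mxE.
by apply/matrixP => i j; rewrite ord1 h // mxE.
Qed.

Lemma En (T : finComPzRingType) n k : (n <= k)%N -> E T n k = setT.
Proof.
move=> nk; apply/setP => v; rewrite in_setT; apply/memEP => i ki.
by move: (ltn_ord i); rewrite ltnNge (leq_trans nk ki).
Qed.

Lemma E_sub (T : finComPzRingType) n k k' : (k <= k')%N -> E T n k \subset E T n k'.
Proof.
move=> kk; apply/subsetP => v /memEP h; apply/memEP => i ki; apply: h; exact: leq_trans ki.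
Qed.

Lemma E_proper (T : finComPzRingType) n k k' : (1 != 0 :> T) -> (k < k')%N -> (k' <= n)%N ->
  E T n k \proper E T n k'.
Proof.
move=> nz kk kn; rewrite properE E_sub ?(ltnW kk) //=.
have kn' : (k < n)%N by apply: leq_trans kn.
apply/subsetPn; exists (delta_mx (Ordinal kn') 0).
  by apply/memEP => i ki; rewrite mxE; case: eqP => // ie; move: ki; rewrite ie /= leqNgt kk.
by apply/memEP => /(_ (Ordinal kn') (leqnn _)); rewrite mxE !eqxx; apply/eqP.
Qed.

Lemma E_card_lt (T : finComPzRingType) n a b : (#|E T n a| < #|E T n b|)%N -> (a < b)%N.
Proof.
rewrite ltnNge; apply: contraR; rewrite -leqNgt => ba; apply: subset_leq_card; exact: E_sub.
Qed.

Lemma colEd (T : pzSemiRingType) n m (M : 'M[T]_(m, n)) (s : 'I_n) r :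
  (M *m delta_mx s (0 : 'I_1)) r 0 = M r s.
Proof.
rewrite mxE (bigD1 s) //= mxE !eqxx mulr1 big1 ?addr0 // => l /negbTE ls.
by rewrite mxE ls mulr0.
Qed.

Lemma delta_E (T : finComPzRingType) n (s : 'I_n) k : (s < k)%N -> delta_mx s 0 \in E T n k.
Proof.
move=> sk; apply/memEP => i ki; rewrite mxE; case: eqP => // ie.
by move: sk; rewrite -ie ltnNge ki.
Qed.

Lemma act_E_cols (T : finComPzRingType) n (P P' : 'M[T]_n) k :
  (forall r s : 'I_n, (s < k)%N -> P' r s = P r s) -> act P' (E T n k) = act P (E T n k).
Proof.
move=> h.
have e : forall v, v \in E T n k -> P' *m v = P *m v.
  move=> v /memEP vE; apply/matrixP => r j; rewrite ord1 !mxE; apply: eq_bigr => s _.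
  case: (ltnP s k) => sk; first by rewrite h.
  by rewrite vE // !mulr0.
apply/setP => x; apply/imsetP/imsetP => [[v vE ->]|[v vE ->]]; exists v => //; by rewrite e.
Qed.

Lemma act_stab (T : finComPzRingType) n (Y : 'M[T]_n) m :
  invertible Y -> (forall r s : 'I_n, (s < m)%N -> (m <= r)%N -> Y r s = 0) ->
  act Y (E T n m) = E T n m.
Proof.
move=> iY h; apply/eqP; rewrite eqEcard card_act // leqnn andbT.
apply/subsetP => x /imsetP [v /memEP vE ->]; apply/memEP => r mr; rewrite mxE big1 // => s _.
by case: (ltnP s m) => sm; [rewrite h // mul0r | rewrite vE // mulr0].
Qed.

Lemma stab_zero (T : finComPzRingType) n (Y : 'M[T]_n) m :
  act Y (E T n m) \subset E T n m -> forall r s : 'I_n, (s < m)%N -> (m <= r)%N -> Y r s = 0.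
Proof.
move=> /subsetP h r s sm mr.
by rewrite -colEd; move/memEP: (h _ (mem_act Y (delta_E T sm))); apply.
Qed.

Lemma sub_sum (T : finComPzRingType) n (A : {set 'cV[T]_n}) (I : finType) (a : I -> T) x :
  is_submodule A -> (forall i, x i \in A) -> \sum_i a i *: x i \in A.
Proof.
case=> [A0 [AD AZ]] xA; apply: (big_ind (fun v => v \in A)) => // i _; exact: AZ.
Qed.

Lemma sub_act (T : finComPzRingType) n (P : 'M[T]_n) (A : {set 'cV[T]_n}) : is_submodule A -> is_submodule (act P A).
Proof.
case=> [A0 [AD AZ]]; split; first by rewrite -(mulmx0 _ P); apply: mem_act.
split=> [x y /imsetP [u uA ->] /imsetP [v vA ->]|r x /imsetP [u uA ->]].
  by rewrite -mulmxDr; apply: mem_act; apply: AD.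
by rewrite scalemxAr; apply: mem_act; apply: AZ.
Qed.

Lemma sub_E (T : finComPzRingType) n k : is_submodule (E T n k).
Proof.
split; first by apply/memEP => i _; rewrite mxE.
split=> [x y /memEP hx /memEP hy|r x /memEP hx]; apply/memEP => i ki; rewrite !mxE ?hx ?hy //.
  by rewrite addr0.
by rewrite mulr0.
Qed.


Lemma sum_scaleB (T : pzRingType) n (I : finType) (a a' : I -> T) (x : I -> 'cV[T]_n) :
  \sum_i (a i - a' i) *: x i = \sum_i a i *: x i - \sum_i a' i *: x i.
Proof. by rewrite -sumrB; apply: eq_bigr => i _; rewrite scalerBl. Qed.

Lemma card_gt1 (T : finComPzRingType) : (1 != 0 :> T) -> (1 < #|T|)%N.
Proof. by move=> nz; apply/card_gt1P; exists 0, 1; split => //; rewrite eq_sym. Qed.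

Lemma mul_rowcol (T : finComPzRingType) k1 k2 (b : 'I_k1 -> 'cV[T]_(k1 + k2))
   (d : 'I_k2 -> 'cV[T]_(k1 + k2)) (v : 'cV[T]_(k1 + k2)) :
  row_mx (\matrix_(r, i) b i r 0) (\matrix_(r, j) d j r 0) *m v
  = \sum_i usubmx v i 0 *: b i + \sum_j dsubmx v j 0 *: d j.
Proof.
rewrite -{1}(vsubmxK v) mul_row_col; congr (_ + _);
  apply/matrixP => r c; rewrite ord1 !mxE summxE; apply: eq_bigr => i _;
  by rewrite !mxE mulrC.
Qed.

Lemma vertex_std (T : finComPzRingType) n (A : {set 'cV[T]_n}) :
  (1 != 0 :> T) -> is_submodule A -> free_mod A [set 0] -> free_mod setT A ->
  exists a Q, (a <= n)%N /\ invertible Q /\ A = act Q (E T n a).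
Proof.
move=> nz subA [k1 [b [bA [bspan bind]]]] [k2 [d [_ [dspan dind]]]].
pose G (p : {ffun 'I_k1 -> T} * {ffun 'I_k2 -> T}) : 'cV[T]_n :=
  \sum_i p.1 i *: b i + \sum_j p.2 j *: d j.
have Gsurj : forall x, exists p, G p = x.
  move=> x; case: (dspan x) => // be [y [yA ->]].
  case: (bspan y yA) => al [z [/set1P -> ->]].
  exists ([ffun i => al i], [ffun j => be j]); rewrite /G addr0 addrC.
  by congr (_ + _); apply: eq_bigr => i _; rewrite ffunE.
have Ginj : injective G.
  move=> [p1 p2] [q1 q2]; rewrite /G /= => e.
  have e2 : p2 = q2.
    have h : \sum_j (p2 j - q2 j) *: d j \in A.
      rewrite sum_scaleB.
      have -> : \sum_j p2 j *: d j - \sum_j q2 j *: d j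
              = \sum_i (q1 i - p1 i) *: b i.
        rewrite sum_scaleB; move: e; set P1 := \sum_(i < k1) _; set P2 := \sum_(j < k2) _; set Q1 := \sum_(i < k1) _; set Q2 := \sum_(j < k2) _ => e.
        by rewrite -[P2](addKr P1) e addrA addrK addrC.
      by apply: sub_sum.
    by apply/ffunP => j; apply/eqP; rewrite -subr_eq0; apply/eqP; apply: (dind _ h).
  subst q2; congr (_, _); apply/ffunP => i; apply/eqP; rewrite -subr_eq0; apply/eqP.
  apply: (bind (fun i => p1 i - q1 i)).
  by rewrite sum_scaleB; apply/set1P; apply/eqP; rewrite subr_eq0 (addIr _ e).
have card_eq : (#|T| ^ (k1 + k2) = #|T| ^ n)%N.
  have := card_imset predT Ginj.
  have -> : [set G x | x in predT] = setT.
    by apply/setP => x; rewrite inE; case: (Gsurj x) => p <-; apply/imsetP; exists p.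
  by rewrite cardsT card_prod !card_ffun !card_ord card_mx muln1 expnD => ->.
have e : (k1 + k2)%N = n by apply/eqP; rewrite -(eqn_exp2l _ _ (card_gt1 nz)) card_eq.
subst n.
pose Q := row_mx (\matrix_(r, i) b i r 0) (\matrix_(r, j) d j r 0).
have QG : forall v, Q *m v = G ([ffun i => usubmx v i 0], [ffun j => dsubmx v j 0]).
  move=> v; rewrite /Q mul_rowcol /G; congr (_ + _); apply: eq_bigr => i _; by rewrite ffunE.
have Qsurj : forall x : 'cV[T]_(k1 + k2), exists v, Q *m v = x.
  move=> x; case: (Gsurj x) => -[p1 p2] <-; exists (col_mx (\col_i p1 i) (\col_j p2 j)).
  rewrite QG col_mxKu col_mxKd; congr (G (_, _)); apply/ffunP => i; by rewrite !ffunE mxE.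
pose pre (x : 'cV[T]_(k1 + k2)) : 'cV[T]_(k1 + k2) := odflt 0 [pick v | Q *m v == x].
have preP : forall x : 'cV[T]_(k1 + k2), Q *m pre x = x.
  move=> x; rewrite /pre; case: pickP => [v /eqP //|/= none].
  by case: (Qsurj x) => v vx; move: (none v); rewrite vx eqxx.
have iQ : invertible Q.
  apply: (@invt_right _ _ _ (\matrix_(r, s) pre (delta_mx s 0) r 0)).
  apply/matrixP => r s; rewrite [RHS]mxE mxE.
  have := congr1 (fun M : 'cV_(k1 + k2) => M r 0) (preP (delta_mx s 0)).
  by rewrite !mxE eqxx andbT => <-; apply: eq_bigr => l _; rewrite !mxE.
exists k1, Q; split; first exact: leq_addr.
split=> //.
apply/setP => x; apply/idP/imsetP => [xA|[v /memEP vE ->]].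
  case: (bspan x xA) => al [z [/set1P -> ->]].
  exists (col_mx (\col_i al i) 0).
    apply/memEP => i ki; case: (splitP i) => [j ij|j ij].
      by move: (ltn_ord j); rewrite -ij ltnNge ki.
    have -> : i = rshift k1 j by apply: val_inj.
    by rewrite col_mxEd mxE.
  rewrite QG col_mxKu col_mxKd /G addr0 /=.
  rewrite [X in _ = _ + X]big1 ?addr0; last by move=> j _; rewrite ffunE mxE scale0r.
  by apply: eq_bigr => i _; rewrite ffunE !mxE.
rewrite QG /G /= [X in _ + X]big1 ?addr0; last first.
  by move=> j _; rewrite ffunE mxE vE ?scale0r // leq_addr.
by apply: sub_sum => // i; apply: bA.
Qed.


Definition F (T : finComPzRingType) n (k : nat) : {set 'cV[T]_n} :=
  [set v : 'cV[T]_n | [forall i : 'I_n, (i < k)%N ==> (v i 0 == 0)]].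

Lemma memFP (T : finComPzRingType) n k (v : 'cV[T]_n) :
  reflect (forall i : 'I_n, (i < k)%N -> v i 0 = 0) (v \in F T n k).
Proof.
rewrite inE; apply: (iffP forallP) => [h i ki|h i]; first by move/implyP/(_ ki)/eqP: (h i).
by apply/implyP => ki; rewrite h.
Qed.

Lemma sub_F (T : finComPzRingType) n k : is_submodule (F T n k).
Proof.
split; first by apply/memFP => i _; rewrite mxE.
split=> [x y /memFP hx /memFP hy|r x /memFP hx]; apply/memFP => i ki; rewrite !mxE ?hx ?hy //.
  by rewrite addr0.
by rewrite mulr0.
Qed.

Lemma sum_delta_entry (T : finComPzRingType) n (I : finType) (a : I -> T) (h : I -> 'I_n) r :
  (\sum_i a i *: delta_mx (h i) (0 : 'I_1)) r 0 = \sum_i a i * (h i == r)%:R.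
Proof. by rewrite summxE; apply: eq_bigr => i _; rewrite !mxE eqxx andbT eq_sym. Qed.

Lemma sum_delta_inj (T : finComPzRingType) n (I : finType) (a : I -> T) (h : I -> 'I_n) i0 :
  injective h -> (\sum_i a i *: delta_mx (h i) (0 : 'I_1)) (h i0) 0 = a i0.
Proof.
move=> ih; rewrite sum_delta_entry (bigD1 i0) //= eqxx mulr1 big1 ?addr0 //.
by move=> i ii0; rewrite (inj_eq ih) (negbTE ii0) mulr0.
Qed.

Lemma vec_split (T : finComPzRingType) k l (v : 'cV[T]_(k + l)) :
  v = \sum_i v (lshift l i) 0 *: delta_mx (lshift l i) 0
      + \sum_j v (rshift k j) 0 *: delta_mx (rshift k j) 0.
Proof.
rewrite {1}(matrix_sum_delta v) big_split_ord /=.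
by congr (_ + _); apply: eq_bigr => i _; rewrite big_ord1.
Qed.

Lemma mul_sum_delta (T : finComPzRingType) n (P : 'M[T]_n) (I : finType) (a : I -> T) (h : I -> 'I_n) :
  P *m (\sum_i a i *: delta_mx (h i) (0 : 'I_1)) = \sum_i a i *: (P *m delta_mx (h i) 0).
Proof. by rewrite mulmx_sumr; apply: eq_bigr => i _; rewrite scalemxAr. Qed.

Lemma std_vertex (T : finComPzRingType) n (P : 'M[T]_n) k :
  (1 != 0 :> T) -> invertible P -> (0 < k)%N -> (k < n)%N -> tits_vertex (act P (E T n k)).
Proof.
move=> nz iP k0 kn.
have subA : is_submodule (act P (E T n k)) by apply: sub_act; apply: sub_E.
have e0 : delta_mx (Ordinal (ltn_trans k0 kn)) 0 \in E T n k by apply: delta_E.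
have Pinj := @mulmx_inj _ _ 1 _ iP.
split => //.
- apply/eqP => /setP /(_ (P *m delta_mx (Ordinal (ltn_trans k0 kn)) 0)).
  rewrite mem_act // in_set1 => /esym /eqP; rewrite -(mulmx0 _ P) => /Pinj.
  move/matrixP => /(_ (Ordinal (ltn_trans k0 kn)) 0); rewrite !mxE !eqxx => /eqP.
  by rewrite (negbTE nz).
- apply/eqP => e; have := E_proper nz kn (leqnn n).
  rewrite -(act_properE _ _ iP) e En // act_setT //; apply/negP; rewrite properE subxx //.
- exists (act P (F T n k)); split; first by apply: sub_act; apply: sub_F.
  split.
    apply/setP => x; rewrite inE in_set1; apply/andP/eqP => [[/imsetP [u /memEP uE ->]
       /imsetP [w /memFP wF /Pinj uw]]|->].
      rewrite -(mulmx0 _ P); congr (_ *m _); apply/matrixP => i j; rewrite ord1 mxE.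
      by case: (ltnP i k) => ik; [rewrite uw wF | rewrite uE].
    by split; rewrite -(mulmx0 _ P); apply: mem_act; [apply/memEP | apply/memFP] => i _; rewrite mxE.
  move=> x; case: (iP) => Q [PQ _].
  pose v := Q *m x.
  exists (P *m \col_i (if (i < k)%N then v i 0 else 0)), (P *m \col_i (if (i < k)%N then 0 else v i 0)).
  split; first by apply: mem_act; apply/memEP => i ki; rewrite mxE ltnNge ki.
  split; first by apply: mem_act; apply/memFP => i ki; rewrite mxE ki.
  rewrite -mulmxDr -{1}(mul1mx x) -PQ -mulmxA; congr (_ *m _).
  by apply/matrixP => i j; rewrite ord1 !mxE; case: ifP => _; rewrite ?addr0 ?add0r.
- have [l e] : exists l, (k + l)%N = n by exists (n - k)%N; rewrite subnKC // ltnW.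
  subst n; clear e0.
  split.
    exists k, (fun i => P *m delta_mx (lshift l i) 0).
    split; first by move=> i; apply: mem_act; apply: delta_E; rewrite /= ltn_ord.
    split.
      move=> x /imsetP [v /memEP vE ->]; exists (fun i => v (lshift l i) 0), 0.
      split; first by rewrite in_set1.
      rewrite addr0 {1}(vec_split v) mulmxDr !mul_sum_delta [X in _ + X]big1 ?addr0 //.
      by move=> j _; rewrite vE ?scale0r ?mul0mx //= leq_addr.
    move=> a; rewrite -mul_sum_delta in_set1 => /eqP ha i.
    have := congr1 (fun M : 'cV_(k + l) => M (lshift l i) 0) (Pinj _ _ (etrans ha (esym (mulmx0 _ P)))).
    by rewrite sum_delta_inj ?mxE //; apply: lshift_inj.
  exists l, (fun j => P *m delta_mx (rshift k j) 0).
  split; first by move=> j; rewrite inE.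
  split.
    move=> x _; case: (iP) => Q [PQ _]; pose v := Q *m x.
    have xv : x = P *m v by rewrite /v mulmxA PQ mul1mx.
    exists (fun j => v (rshift k j) 0), (\sum_i v (lshift l i) 0 *: (P *m delta_mx (lshift l i) 0)).
    split.
      by apply: sub_sum => // i; apply: mem_act; apply: delta_E; rewrite /= ltn_ord.
    by rewrite xv {1}(vec_split v) mulmxDr !mul_sum_delta addrC.
  move=> a; rewrite -mul_sum_delta => /imsetP [w /memEP wE /Pinj aw] j.
  have := congr1 (fun M : 'cV_(k + l) => M (rshift k j) 0) aw.
  by rewrite sum_delta_inj ?wE //= ?leq_addr //; apply: rshift_inj.
Qed.


Definition stdf (T : finComPzRingType) n (P : 'M[T]_n) (r : seq nat) : seq {set 'cV[T]_n} :=
  map (fun k => act P (E T n k)) r.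

Lemma std_flag (T : finComPzRingType) n (P : 'M[T]_n) r :
  (1 != 0 :> T) -> invertible P -> subseq r (iota 1 n.-1) -> is_flag (stdf P r).
Proof.
move=> nz iP sr; split.
  move=> A /mapP [k kr ->]; have := mem_subseq sr kr; rewrite mem_iota => /andP [k1 kn].
  apply: std_vertex => //; lia.
rewrite /stdf sorted_map.
apply: (@sub_in_sorted _ (mem (iota 1 n.-1)) ltn).
- move=> a b; rewrite !mem_iota => /andP [a1 an] /andP [b1 bn] ab /=.
  by rewrite act_properE // E_proper //; lia.
- by apply/allP => x; apply: mem_subseq.
- apply: (subseq_sorted ltn_trans sr); exact: iota_ltn_sorted.
Qed.

Lemma std_good (T : finComPzRingType) n (P : 'M[T]_n) r :
  (1 != 0 :> T) -> invertible P -> subseq r (iota 1 n.-1) -> is_good_flag (stdf P r).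
Proof.
move=> nz iP sr; split; first exact: std_flag.
exists (stdf P (iota 1 n.-1)); split; last exact: map_subseq.
split; first by apply: std_flag => //; apply: subseq_refl.
by rewrite size_map size_iota.
Qed.

Lemma vertex_nz (T : finComPzRingType) n (A : {set 'cV[T]_n}) : tits_vertex A -> (1 != 0 :> T).
Proof.
case=> [[A0 _] An _ _ _]; apply/negP => /eqP e; move/negP: An; apply.
apply/eqP/setP => v; rewrite in_set1.
have -> : v = 0 by rewrite -[v]scale1r e scale0r.
by rewrite A0 eqxx.
Qed.

Lemma vertex_std' (T : finComPzRingType) n (A : {set 'cV[T]_n}) : tits_vertex A ->
  exists a Q, (a <= n)%N /\ invertible Q /\ A = act Q (E T n a).
Proof.
move=> vA; have nz := vertex_nz vA; case: vA => subA _ _ _ [f1 f2].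
exact: vertex_std.
Qed.

Lemma stab_zero2 (T : finComPzRingType) n (Y : 'M[T]_n) m m' :
  act Y (E T n m) \subset E T n m' -> forall r s : 'I_n, (s < m)%N -> (m' <= r)%N -> Y r s = 0.
Proof.
move=> /subsetP h r s sm mr.
by rewrite -colEd; move/memEP: (h _ (mem_act Y (delta_E T sm))); apply.
Qed.

Lemma complete_ranks (T : finComPzRingType) n (c : seq {set 'cV[T]_n}) :
  is_complete_flag c -> forall j, (j < size c)%N -> forall a (Q : 'M[T]_n),
  invertible Q -> nth set0 c j = act Q (E T n a) -> a = j.+1.
Proof.
case=> [[vc sc] szc].
have adj : forall j, (j.+1 < size c)%N -> nth set0 c j \proper nth set0 c j.+1.
  have ptr : transitive (fun A B : {set 'cV[T]_n} => A \proper B).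
    by move=> B A C; apply: proper_trans.
  move=> j jc; apply: (sorted_ltn_nth ptr set0 sc) => //; rewrite inE //.
  exact: ltnW.
have vj : forall j, (j < size c)%N -> tits_vertex (nth set0 c j).
  by move=> j jc; apply: vc; apply: mem_nth.
have low : forall j, (j < size c)%N -> forall a (Q : 'M[T]_n),
    invertible Q -> nth set0 c j = act Q (E T n a) -> (j < a)%N.
  elim=> [|j IH] jc a Q iQ e.
    case: (vj 0%N jc) => _ + _ _ _; rewrite e; case: a {e} => [|a] //.
    by rewrite E0 act_set0 eqxx.
  have [a' [Q' [_ [iQ' e']]]] := vertex_std' (vj j (ltnW jc)).
  have := IH (ltnW jc) a' Q' iQ' e'.
  have := proper_card (adj j jc); rewrite e e' !card_act // => /E_card_lt; lia.
have high : forall d j, (j + d.+1)%N = size c -> forall a (Q : 'M[T]_n),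
    invertible Q -> nth set0 c j = act Q (E T n a) -> (a + d < n)%N.
  elim=> [|d IH] j jd a Q iQ e.
    have jc : (j < size c)%N by lia.
    case: (vj j jc) => _ _ + _ _; rewrite e addn0 ltnNge; apply: contra => na.
    by rewrite En // act_setT.
  have jc : (j.+1 < size c)%N by lia.
  have [a' [Q' [_ [iQ' e']]]] := vertex_std' (vj j.+1 jc).
  have := IH j.+1 ltac:(lia) a' Q' iQ' e'.
  have := proper_card (adj j jc); rewrite e e' !card_act // => /E_card_lt; lia.
move=> j jc a Q iQ e.
have := low j jc a Q iQ e.
have := high (size c - j.+1)%N j ltac:(lia) a Q iQ e.
lia.
Qed.

Lemma complete_std (T : finComPzRingType) n (c : seq {set 'cV[T]_n}) : is_complete_flag c ->
  exists P, invertible P /\ c = stdf P (iota 1 n.-1).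
Proof.
move=> cc; have ranks := complete_ranks cc; case: (cc) => [[vc sc] szc].
case: (posnP (size c)) => [c0|c0].
  exists 1%:M; split; first exact: invt1.
  have e : n.-1 = 0%N by rewrite -szc.
  by rewrite e (size0nil c0).
have nz := vertex_nz (vc _ (mem_nth set0 c0)).
have ptr : transitive (fun A B : {set 'cV[T]_n} => A \proper B).
  by move=> B A C; apply: proper_trans.
have adj : forall j, (j.+1 < size c)%N -> nth set0 c j \subset nth set0 c j.+1.
  move=> j jc; apply: proper_sub; apply: (sorted_ltn_nth ptr set0 sc) => //; rewrite inE //.
  exact: ltnW.
have claim : forall k, (k <= size c)%N -> exists P, invertible P /\
    forall j, (j < k)%N -> nth set0 c j = act P (E T n j.+1).
  elim=> [|k IH] kc; first by exists 1%:M; split => //; exact: invt1.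
  have [P [iP hP]] := IH (ltnW kc).
  have kn : (k < n)%N by lia.
  have [a [Q [_ [iQ eQ]]]] := vertex_std' (vc _ (mem_nth set0 kc)).
  have ak := ranks k kc a Q iQ eQ; subst a.
  case: (iP) => Pi [PPi PiP]; case: (iQ) => Qi [QQi QiQ].
  pose X := Qi *m P; pose Xi := Pi *m Q.
  have XiX : Xi *m X = 1%:M by rewrite /X /Xi mulmxA -(mulmxA Pi) QQi mulmx1 PiP.
  have sub1 : act P (E T n k) \subset act Q (E T n k.+1).
    case: k {IH} kc kn eQ hP => [|k] kc kn eQ hP.
      rewrite E0 act_set0 sub1set; rewrite -(mulmx0 _ Q); apply: mem_act.
      by apply/memEP => i _; rewrite mxE.
    by rewrite -hP // -eQ; apply: adj.
  have hX : forall a b : 'I_n, (b < k)%N -> (k < a)%N -> X a b = 0.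
    apply: (@stab_zero2 _ _ _ k k.+1); rewrite /X act_mul.
    by apply: (subset_trans (act_subset Qi sub1)); rewrite act_inv.
  have [w [wk dY]] := @step_exists _ _ X Xi (Ordinal kn) XiX hX.
  pose Y := Ymat X (Ordinal kn) w.
  have iY : invertible Y by apply: (@invt_det _ _ _ 1); rewrite dY mulr1.
  exists (Q *m Y); split; first exact: invtM.
  have QX : Q *m X = P by rewrite /X mulmxA QQi mul1mx.
  have cols : forall r s : 'I_n, (s < k)%N -> (Q *m Y) r s = P r s.
    move=> r s sk; rewrite -QX !mxE; apply: eq_bigr => l _; by rewrite mxE /= sk.
  move=> j; rewrite ltnS leq_eqVlt => /orP [/eqP ->|jk].
    rewrite eQ act_mul (@act_stab _ _ Y) //.
    move=> r s sk kr; rewrite mxE /=.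
    case: ifP => [sk'|/negbT]; first by apply: hX.
    rewrite -leqNgt => ks.
    rewrite ifT ?wk //; apply/eqP; apply: val_inj => /=. lia.
  rewrite hP //; symmetry; apply: act_E_cols => r s sj; apply: cols; lia.
have [P [iP hP]] := claim _ (leqnn _).
exists P; split => //.
apply: (eq_from_nth (x0 := set0)); first by rewrite size_map size_iota.
move=> j jc; rewrite hP // /stdf (nth_map 0%N); last by rewrite size_iota -szc.
by rewrite nth_iota -?szc // add1n.
Qed.

Lemma good_std (T : finComPzRingType) n (s : seq {set 'cV[T]_n}) : is_good_flag s ->
  exists P r, invertible P /\ subseq r (iota 1 n.-1) /\ s = stdf P r.
Proof.
case=> _ [c [cc sc]]; have [P [iP ce]] := complete_std cc.
move: sc; rewrite ce => /subseqP [m _ ->].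
exists P, (mask m (iota 1 n.-1)); split => //; split; first exact: mask_subseq.
by rewrite /stdf map_mask.
Qed.


Lemma exists_max (R : finComPzRingType) (I : {set R}) :
  is_ideal I -> 1 \notin I -> exists M, is_maximal_ideal M /\ I \subset M.
Proof.
move: {2}(#|~: I|) (leqnn #|~: I|) => m; elim: m I => [|m IH] I hm iI nI.
  move: hm; rewrite leqn0 cards_eq0 => /eqP e.
  by move: nI; rewrite -in_setC e inE.
case: (classic (is_maximal_ideal I)) => [mI|nmI]; first by exists I.
have : ~ (forall J, is_ideal J -> I \subset J -> J = I \/ 1 \in J).
  by move=> h; apply: nmI; split => //; split.
move/not_all_ex_not => [J HJ].
have [iJ HJ2] := imply_to_and _ _ HJ; have [IJ HJ3] := imply_to_and _ _ HJ2; have [JI nJ] := not_or_and _ _ HJ3.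
have pIJ : I \proper J by rewrite properEneq IJ andbT; apply/eqP => e; apply: JI.
have [M [mM JM]] : exists M, is_maximal_ideal M /\ J \subset M.
  apply: IH => //; last by apply/negP.
  have := proper_card pIJ; have := cardsC I; have := cardsC J; lia.
by exists M; split => //; apply: subset_trans JM; apply: proper_sub.
Qed.

Lemma jac_unit (R : finComPzRingType) (j : R) : in_jacobson j -> exists u, (1 - j) * u = 1.
Proof.
move=> jJ; apply: NNPP => nu.
pose I0 := [set (1 - j) * r | r in [set: R]].
have iI : is_ideal I0.
  split; first by apply/imsetP; exists 0; rewrite ?inE ?mulr0.
  split=> [x y /imsetP [a _ ->] /imsetP [b _ ->]|r x /imsetP [a _ ->]].
    by apply/imsetP; exists (a + b); rewrite ?inE ?mulrDr.
  by apply/imsetP; exists (r * a); rewrite ?inE // mulrCA.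
have nI : 1 \notin I0 by apply/negP => /imsetP [u _ e]; apply: nu; exists u.
have [M [mM IM]] := exists_max iI nI.
have jM := jJ M mM.
have jM' : 1 - j \in M by apply: (subsetP IM); apply/imsetP; exists 1; rewrite ?inE ?mulr1.
case: mM => [[_ [MD _]] [nM _]]; move/negP: nM; apply.
by have := MD _ _ jM' jM; rewrite subrK.
Qed.

Lemma lift_unit (R S : finComPzRingType) (f : {rmorphism R -> S}) :
  (forall y : S, exists x : R, f x = y) -> (forall x : R, f x = 0 -> in_jacobson x) ->
  forall d : R, (exists e', f d * e' = 1) -> exists e, d * e = 1.
Proof.
move=> fs fJ d [e' de]; case: (fs e') => e0 fe0.
have : in_jacobson (1 - d * e0) by apply: fJ; rewrite rmorphB rmorph1 rmorphM fe0 de subrr.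
move/jac_unit => [u hu]; exists (e0 * u); by rewrite mulrA -hu opprB addrC subrK.
Qed.

Lemma invt_map (R S : finComPzRingType) (f : {rmorphism R -> S}) n (P : 'M[R]_n) :
  invertible P -> invertible (map_mx f P).
Proof. by case=> Q [PQ _]; apply: (@invt_right _ _ _ (map_mx f Q)); rewrite -map_mxM PQ map_mx1. Qed.

Lemma lift_invt (R S : finComPzRingType) (f : {rmorphism R -> S}) n (Q : 'M[R]_n) :
  (forall y : S, exists x : R, f x = y) -> (forall x : R, f x = 0 -> in_jacobson x) ->
  invertible (map_mx f Q) -> invertible Q.
Proof.
move=> fs fJ /det_invt [e' de]; rewrite det_map_mx in de.
have [e he] := lift_unit fs fJ (ex_intro _ e' de).
exact: invt_det he.
Qed.

Definition liftS (R S : finComPzRingType) (f : {rmorphism R -> S}) (y : S) : R :=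
  if y == 0 then 0 else odflt 0 [pick x | f x == y].

Lemma liftSK (R S : finComPzRingType) (f : {rmorphism R -> S}) :
  (forall y : S, exists x : R, f x = y) -> forall y, f (liftS f y) = y.
Proof.
move=> fs y; rewrite /liftS; case: eqP => [->|_]; first by rewrite rmorph0.
case: pickP => [x /eqP //|none]; case: (fs y) => x fx; by move: (none x); rewrite fx eqxx.
Qed.

Lemma liftS0 (R S : finComPzRingType) (f : {rmorphism R -> S}) : liftS f 0 = 0.
Proof. by rewrite /liftS eqxx. Qed.

Lemma map_liftK (R S : finComPzRingType) (f : {rmorphism R -> S}) m n (M : 'M[S]_(m, n)) :
  (forall y : S, exists x : R, f x = y) -> map_mx f (map_mx (liftS f) M) = M.
Proof. by move=> fs; apply/matrixP => i j; rewrite !mxE liftSK. Qed.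

Lemma reduce_act (R S : finComPzRingType) (f : {rmorphism R -> S}) n (g : 'M[R]_n) A :
  reduce f (act g A) = act (map_mx f g) (reduce f A).
Proof.
rewrite /reduce /act -!imset_comp; apply: eq_imset => v /=; by rewrite map_mxM.
Qed.

Lemma reduce_E (R S : finComPzRingType) (f : {rmorphism R -> S}) n k :
  (forall y : S, exists x : R, f x = y) -> reduce f (E R n k) = E S n k.
Proof.
move=> fs; apply/setP => w; apply/imsetP/memEP => [[v /memEP vE ->] i ki|wE].
  by rewrite mxE vE // rmorph0.
exists (map_mx (liftS f) w); last by rewrite map_liftK.
by apply/memEP => i ki; rewrite mxE wE // liftS0.
Qed.

Lemma reduce_std (R S : finComPzRingType) (f : {rmorphism R -> S}) n (P : 'M[R]_n) r :
  (forall y : S, exists x : R, f x = y) ->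
  map (@reduce R S f n) (stdf P r) = stdf (map_mx f P) r.
Proof.
move=> fs; rewrite /stdf -map_comp; apply: eq_map => k /=; by rewrite reduce_act reduce_E.
Qed.

Lemma zero_ring_good (T : finComPzRingType) n (s : seq {set 'cV[T]_n}) :
  is_good_flag s -> s != [::] -> (1 != 0 :> T).
Proof.
case: s => [//|A s] [[vs _] _] _; exact: (vertex_nz (vs A (mem_head _ _))).
Qed.

Lemma nonzero_lift (R S : finComPzRingType) (f : {rmorphism R -> S}) :
  (forall x : R, f x = 0 -> in_jacobson x) -> (1 != 0 :> R) -> (1 != 0 :> S).
Proof.
move=> fJ nzR; apply/eqP => e.
have := jac_unit (fJ 1 ltac:(by rewrite rmorph1 e)) ; rewrite subrr => -[u].
by rewrite mul0r => /esym /eqP; rewrite (negbTE nzR).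
Qed.


Lemma empty_good (T : finComPzRingType) n : n.-1 = 0%N -> is_good_flag ([::] : seq {set 'cV[T]_n}).
Proof.
move=> e; have fl : is_flag ([::] : seq {set 'cV[T]_n}) by split => // A; rewrite in_nil.
split => //; exists [::]; split => //; split => //; by rewrite e.
Qed.

Lemma good_complete_size (T : finComPzRingType) n (s : seq {set 'cV[T]_n}) :
  is_good_flag s -> (0 < n.-1)%N -> (1 != 0 :> T).
Proof.
case=> _ [c [[[vc _] szc] _]] n0.
case: c vc szc => [|A c] vc szc; first by move: n0; rewrite -szc.
exact: (vertex_nz (vc A (mem_head _ _))).
Qed.

Lemma lift_good (R S : finComPzRingType) (f : {rmorphism R -> S}) n (t : seq {set 'cV[S]_n}) :
  (forall y : S, exists x : R, f x = y) -> (forall x : R, f x = 0 -> in_jacobson x) ->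
  is_good_flag t -> exists s, is_good_flag s /\ map (@reduce R S f n) s = t.
Proof.
move=> fs fJ gt; case: (eqVneq (1 : R) 0) => [e|nzR].
  have eS : (1 : S) = 0 by rewrite -(rmorph1 f) e rmorph0.
  have n0 : n.-1 = 0%N.
    apply/eqP; rewrite -leqn0 leqNgt; apply/negP => /(good_complete_size gt).
    by rewrite eS eqxx.
  have t0 : t = [::].
    by apply/eqP; apply: contraT => /(zero_ring_good gt); rewrite eS eqxx.
  by exists [::]; split; [apply: empty_good | rewrite t0].
have [Pb [r [iPb [sr ->]]]] := good_std gt.
pose P := map_mx (liftS f) Pb.
have fP : map_mx f P = Pb by apply: map_liftK.
have iP : invertible P by apply: (lift_invt fs fJ); rewrite fP.
exists (stdf P r); split; first exact: std_good.
by rewrite reduce_std // fP.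
Qed.

Lemma map_inj_le (h : nat -> nat) n (r r' : seq nat) :
  (forall a b, (a < b)%N -> (b <= n)%N -> (h a < h b)%N) ->
  all (fun k => k <= n)%N r -> all (fun k => k <= n)%N r' -> map h r = map h r' -> r = r'.
Proof.
move=> hm; elim: r r' => [|a r IH] [|b r'] //= /andP [an ar] /andP [bn br] [eab e].
congr (_ :: _); last exact: IH.
case: (ltngtP a b) => // ab; first by move: (hm _ _ ab bn); rewrite eab ltnn.
by move: (hm _ _ ab an); rewrite eab ltnn.
Qed.

Lemma iota_bound n (r : seq nat) : subseq r (iota 1 n.-1) -> all (fun k => k <= n)%N r.
Proof.
move=> sr; apply/allP => k /(mem_subseq sr); rewrite mem_iota => /andP [_ kn]; lia.
Qed.

Lemma trans_good (R S : finComPzRingType) (f : {rmorphism R -> S}) n (s s' : seq {set 'cV[R]_n}) :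
  (forall y : S, exists x : R, f x = y) -> (forall x : R, f x = 0 -> in_jacobson x) ->
  is_good_flag s -> is_good_flag s' ->
  map (@reduce R S f n) s = map (@reduce R S f n) s' ->
  exists g, invertible g /\ map_mx f g = 1%:M /\ map (act g) s = s'.
Proof.
move=> fs fJ gs gs' ered.
case: (eqVneq s [::]) => [s0|sne].
  have s'0 : s' = [::].
    move: ered; rewrite s0 /= => /(congr1 size) /=; rewrite size_map => /esym; exact: size0nil.
  by exists 1%:M; rewrite map_mx1 s0 s'0; split => //; apply: invt1.
have nzR := zero_ring_good gs sne.
have nzS := nonzero_lift fJ nzR.
have [P [r [iP [sr es]]]] := good_std gs.
have [P' [r' [iP' [sr' es']]]] := good_std gs'.
move: ered; rewrite es es' !reduce_std // => e.
have rr : r = r'.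
  apply: (@map_inj_le (fun k => #|E S n k|) n).
  - by move=> a b ab bn; apply: proper_card; apply: E_proper.
  - exact: iota_bound sr.
  - exact: iota_bound sr'.
  - have := congr1 (map (fun A : {set 'cV[S]_n} => #|A|)) e; rewrite /stdf -!map_comp.
    have h : forall P0 : 'M[S]_n, invertible P0 ->
        map ((fun A : {set 'cV[S]_n} => #|A|) \o (fun k => act P0 (E S n k))) =1 map (fun k => #|E S n k|).
      by move=> P0 iP0 l; apply: eq_map => k /=; rewrite card_act.
    by rewrite !h //; apply: invt_map.
subst r'.
case: (iP) => Pi [PPi PiP]; case: (iP') => P'i [P'P'i P'iP'].
pose Qb := map_mx f Pi *m map_mx f P'.
have hk : forall k, k \in r -> act Qb (E S n k) = E S n k.
  move=> k kr; move/eq_in_map: e => /(_ k kr) /= e.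
  by rewrite act_mul -e -act_mul -map_mxM PiP map_mx1 act1.
pose Q := map_mx (liftS f) Qb.
have fQ : map_mx f Q = Qb by apply: map_liftK.
have iQb : invertible Qb.
  apply: invtM; apply: invt_map; last exact: iP'.
  by exists P; split.
have iQ : invertible Q by apply: (lift_invt fs fJ); rewrite fQ.
have hQk : forall k, k \in r -> act Q (E R n k) = E R n k.
  move=> k kr; apply: act_stab => // a b bk ka.
  rewrite mxE (@stab_zero2 _ _ Qb k k) ?liftS0 //; by rewrite hk.
case: (iQ) => Qi [QQi QiQ].
have hQik : forall k, k \in r -> act Qi (E R n k) = E R n k.
  by move=> k kr; rewrite -{1}(hQk k kr) act_inv.
exists (P' *m Qi *m Pi); split.
  apply: invtM; [apply: invtM => // | by exists P; split].
  by exists Q; split.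
split.
  rewrite !map_mxM.
  have h1 : map_mx f Qi *m map_mx f Pi *m map_mx f P' = 1%:M.
    by rewrite -mulmxA -/Qb -fQ -map_mxM QiQ map_mx1.
  have h2 : map_mx f Qi *m map_mx f Pi = map_mx f P'i.
    by rewrite -[LHS]mulmx1 -(map_mx1 f) -P'P'i map_mxM mulmxA h1 mul1mx.
  by rewrite -mulmxA h2 -map_mxM P'P'i map_mx1.
rewrite /stdf -map_comp; apply/eq_in_map => k kr /=.
by rewrite !act_mul (act_inv _ PiP) hQik.
Qed.


Definition pb (P : Prop) : bool := if excluded_middle_informative P then true else false.
Lemma pbP (P : Prop) : reflect P (pb P).
Proof. by rewrite /pb; case: excluded_middle_informative => h; constructor. Qed.

Lemma push_comp (R1 R2 R3 : finComPzRingType) n (K : fieldType) m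
   (phi : {set 'cV[R2]_n} -> {set 'cV[R3]_n}) (psi : {set 'cV[R1]_n} -> {set 'cV[R2]_n})
   (z : m.-tuple {set 'cV[R1]_n} -> K) t :
  push phi (push psi z) t = push (fun A => phi (psi A)) z t.
Proof.
rewrite /push.
under eq_bigr do rewrite big_mkcond.
rewrite exchange_big /= [RHS]big_mkcond; apply: eq_bigr => s _.
rewrite -big_mkcondr /=.
rewrite (eq_bigl (fun u : m.-tuple _ => (map psi s == u :> seq _) && (map phi u == t :> seq _))); last first.
  by move=> u; rewrite andbC.
case: ifP => e.
  rewrite (big_pred1 (map_tuple psi s)) // => u /=.
  apply/andP/eqP => [[/eqP a b]|->]; first by apply: val_inj.
  by split => //; rewrite -map_comp.
rewrite big_pred0 // => u; apply/andP => -[/eqP a /eqP b]; move: e.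
by rewrite -b -a -map_comp eqxx.
Qed.

Lemma push_ext (R1 R2 : finComPzRingType) n (K : fieldType) m
   (phi phi' : {set 'cV[R1]_n} -> {set 'cV[R2]_n}) (z : m.-tuple {set 'cV[R1]_n} -> K) t :
  phi =1 phi' -> push phi z t = push phi' z t.
Proof. by move=> e; apply: eq_bigl => s; rewrite (eq_map e). Qed.

Lemma push_inj (R1 R2 : finComPzRingType) n (K : fieldType) m
   (phi : {set 'cV[R1]_n} -> {set 'cV[R2]_n}) (z : m.-tuple {set 'cV[R1]_n} -> K) s :
  injective phi -> push phi z (map_tuple phi s) = z s.
Proof.
move=> ip; rewrite /push (big_pred1 s) // => s' /=; apply/eqP/eqP => [e|->//].
by apply: val_inj; apply: (inj_map ip).
Qed.

Lemma good_size (T : finComPzRingType) n (s : seq {set 'cV[T]_n}) : is_good_flag s -> (size s <= n.-1)%N.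
Proof. by case=> _ [c [[_ <-] sc]]; apply: size_subseq. Qed.

Lemma bnd0 (T : finComPzRingType) n (K : fieldType) (c : n.-1.-tuple {set 'cV[T]_n} -> K) :
  (0 < n)%N -> is_boundary c -> forall t, c t = 0.
Proof.
move=> n0 [d [sd hd]] t; rewrite hd /bd big1 // => s _; rewrite big1 // => i _.
case: ifP => // _; case: (eqVneq (d s) 0) => [->|/sd]; first by rewrite mulr0.
case=> [//|/good_size]; by rewrite size_tuple ltnn.
Qed.

Lemma zero_bnd (T : finComPzRingType) n (K : fieldType) m (c : m.-tuple {set 'cV[T]_n} -> K) :
  (forall t, c t = 0) -> is_boundary c.
Proof.
move=> c0; exists (fun _ => 0); split; first by move=> s; rewrite eqxx.
move=> t; rewrite c0 /bd big1 // => s _; rewrite big1 // => i _; case: ifP => //; by rewrite mulr0.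
Qed.

Lemma supp_good (T : finComPzRingType) n (K : fieldType) (c : n.-1.-tuple {set 'cV[T]_n} -> K) t :
  supported c -> c t != 0 -> is_good_flag t.
Proof.
move=> sc /sc [/eqP m0|//].
have -> : (t : seq _) = [::] by apply: size0nil; rewrite size_tuple.
exact: empty_good.
Qed.

Lemma act_good (T : finComPzRingType) n (g : 'M[T]_n) (s : seq {set 'cV[T]_n}) :
  invertible g -> is_good_flag s -> is_good_flag (map (act g) s).
Proof.
move=> ig gs; case: (eqVneq s [::]) => [s0|sne]; first by move: gs; rewrite s0.
have nz := zero_ring_good gs sne.
have [P [r [iP [sr ->]]]] := good_std gs.
have -> : map (act g) (stdf P r) = stdf (g *m P) r.
  by rewrite /stdf -map_comp; apply: eq_map => k /=; rewrite act_mul.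
by apply: std_good => //; apply: invtM.
Qed.

Lemma red_act (R S : finComPzRingType) (f : {rmorphism R -> S}) n (g : 'M[R]_n) (s : seq {set 'cV[R]_n}) :
  map_mx f g = 1%:M -> map (@reduce R S f n) (map (act g) s) = map (@reduce R S f n) s.
Proof. by move=> fg; rewrite -map_comp; apply: eq_map => A /=; rewrite reduce_act fg act1. Qed.

Lemma face_subseq (T : finComPzRingType) n i (s : seq {set 'cV[T]_n}) : subseq (face i s) s.
Proof.
rewrite /face -{3}(cat_take_drop i s); apply: cat_subseq; first exact: subseq_refl.
have -> : drop i.+1 s = drop 1 (drop i s) by rewrite drop_drop add1n.
apply: drop_subseq.
Qed.

Lemma face_good (T : finComPzRingType) n i (s : seq {set 'cV[T]_n}) :
  is_good_flag s -> is_good_flag (face i s).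
Proof.
case=> [[vs ss] [c [cc sc]]]; have fs := face_subseq i s.
have ptr : transitive (fun A B : {set 'cV[T]_n} => A \proper B).
  by move=> B A C; apply: proper_trans.
split; first split.
- by move=> A /(mem_subseq fs); apply: vs.
- move: ss; apply: subseq_sorted fs. exact: ptr.
by exists c; split => //; apply: subseq_trans sc.
Qed.

Lemma face_map (T1 T2 : finComPzRingType) n (h : {set 'cV[T1]_n} -> {set 'cV[T2]_n}) i (s : seq {set 'cV[T1]_n}) : face i (map h s) = map h (face i s).
Proof. by rewrite /face map_cat map_take map_drop. Qed.

Lemma size_face (T : finComPzRingType) n i (s : seq {set 'cV[T]_n}) : (i < size s)%N -> size (face i s) = (size s).-1.
Proof. by move=> iS; rewrite /face size_cat size_take size_drop iS; lia. Qed.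


Definition gbool (T : finComPzRingType) n (s : seq {set 'cV[T]_n}) : bool := pb (is_good_flag s).

Definition Nc (R S : finComPzRingType) (f : {rmorphism R -> S}) n m (t : seq {set 'cV[S]_n}) : nat :=
  #|[set s : m.-tuple {set 'cV[R]_n} | gbool s && (map (@reduce R S f n) s == t)]|.

Definition Cc (R S : finComPzRingType) (f : {rmorphism R -> S}) n m i
   (t : seq {set 'cV[S]_n}) (u : seq {set 'cV[R]_n}) : nat :=
  #|[set s : m.-tuple {set 'cV[R]_n} | [&& gbool s, map (@reduce R S f n) s == t & face i s == u]]|.

Lemma Cc_le (R S : finComPzRingType) (f : {rmorphism R -> S}) n m i t
   (u1 u2 : seq {set 'cV[R]_n}) :
  (forall y : S, exists x : R, f x = y) -> (forall x : R, f x = 0 -> in_jacobson x) ->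
  is_good_flag u1 -> is_good_flag u2 -> map (@reduce R S f n) u1 = map (@reduce R S f n) u2 ->
  (Cc f m i t u1 <= Cc f m i t u2)%N.
Proof.
move=> fs fJ g1 g2 e.
have [g [ig [fg gu]]] := trans_good fs fJ g1 g2 e.
rewrite /Cc -(@card_imset _ _ (map_tuple (act g))); last first.
  by move=> a b /(congr1 val) /= /(inj_map (fun A B => @act_injS _ _ g A B ig)) ab; apply: val_inj.
apply: subset_leq_card; apply/subsetP => _ /imsetP [s + ->]; rewrite !inE => /and3P [gs rs fs'].
apply/and3P; split.
- by apply/pbP; apply: act_good => //; apply/pbP.
- by rewrite /= red_act.
- by rewrite /= face_map (eqP fs') gu.
Qed.

Lemma orbit_count (R S : finComPzRingType) (f : {rmorphism R -> S}) n m i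
   (t : m.-tuple {set 'cV[S]_n}) (u : m.-1.-tuple {set 'cV[R]_n}) :
  (forall y : S, exists x : R, f x = y) -> (forall x : R, f x = 0 -> in_jacobson x) ->
  (i < m)%N -> is_good_flag u -> face i t = map (@reduce R S f n) u ->
  Nc f m t = (Nc f m.-1 (map (@reduce R S f n) u) * Cc f m i t u)%N.
Proof.
move=> fs fJ im gu ft.
pose p (s : m.-tuple {set 'cV[R]_n}) : m.-1.-tuple {set 'cV[R]_n} := insubd u (face i s).
have pE : forall s, val (p s) = face i s.
  by move=> s; rewrite /p insubdK // -topredE /= size_face ?size_tuple.
rewrite /Nc -sum1_card.
rewrite (partition_big p (fun u' => gbool u' && (map (@reduce R S f n) u' == map (@reduce R S f n) u))); last first.
  move=> s; rewrite inE => /andP [/pbP gs /eqP rs]; apply/andP; split.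
    by apply/pbP; rewrite pE; apply: face_good.
  by rewrite pE -face_map rs ft.
rewrite (eq_bigr (fun _ => Cc f m i t u)); last first.
  move=> u' /andP [/pbP gu' /eqP ru'].
  have -> : \sum_(s | (s \in [set s0 : m.-tuple _ | gbool s0 && (map (@reduce R S f n) s0 == t)]) && (p s == u')) 1
            = Cc f m i t u'.
    rewrite /Cc -sum1_card; apply: eq_bigl => s; rewrite !inE -andbA; congr [&& _, _ & _].
    by apply/eqP/eqP => [<-|e]; [rewrite pE | apply: val_inj; rewrite pE].
  by apply/eqP; rewrite eqn_leq !Cc_le //.
by rewrite sum_nat_const cardE /= -cardE; congr (_ * _)%N; apply: eq_card => u'; rewrite inE.
Qed.


Definition zlift (R S : finComPzRingType) (f : {rmorphism R -> S}) n (K : fieldType) m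
    (w : m.-tuple {set 'cV[S]_n} -> K) (s : m.-tuple {set 'cV[R]_n}) : K :=
  if gbool s then w (map_tuple (@reduce R S f n) s) / (Nc f m (map (@reduce R S f n) s))%:R else 0.

Lemma natK0 (K : fieldType) (N : nat) : [pchar K] =i pred0 -> (0 < N)%N -> (N%:R != 0 :> K).
Proof. by move=> c0 N0; move/pcharf0P: c0 => ->; rewrite -lt0n. Qed.

Lemma Nc_pos (R S : finComPzRingType) (f : {rmorphism R -> S}) n m (t : seq {set 'cV[S]_n}) :
  (forall y : S, exists x : R, f x = y) -> (forall x : R, f x = 0 -> in_jacobson x) ->
  size t = m -> is_good_flag t -> (0 < Nc f m t)%N.
Proof.
move=> fs fJ st gt; have [s [gs e]] := lift_good fs fJ gt.
have sz : size s == m by rewrite -(size_map (@reduce R S f n)) e st.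
apply/card_gt0P; exists (Tuple sz); rewrite inE /= e eqxx andbT; exact/pbP.
Qed.

Lemma core_sum (R S : finComPzRingType) (f : {rmorphism R -> S}) n (K : fieldType) m
    (w : m.-tuple {set 'cV[S]_n} -> K) i (u : m.-1.-tuple {set 'cV[R]_n}) :
  [pchar K] =i pred0 ->
  (forall y : S, exists x : R, f x = y) -> (forall x : R, f x = 0 -> in_jacobson x) ->
  supported w -> (i < m)%N -> is_good_flag u ->
  \sum_(s : m.-tuple {set 'cV[R]_n}) (if face i s == u :> seq _ then zlift f w s else 0)
  = (\sum_(t : m.-tuple {set 'cV[S]_n}) (if face i t == map (@reduce R S f n) u :> seq _ then w t else 0))
      / (Nc f m.-1 (map (@reduce R S f n) u))%:R.
Proof.
move=> c0 fs fJ sw im gu.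
set red := @reduce R S f n.
have N'0 : (Nc f m.-1 (map red u))%:R != 0 :> K.
  apply: natK0 => //; apply/card_gt0P; exists u; rewrite inE eqxx andbT; exact/pbP.
rewrite (partition_big (map_tuple red) predT) //= mulr_suml; apply: eq_bigr => t _.
have E1 : \sum_(s | map_tuple red s == t) (if face i s == u :> seq _ then zlift f w s else 0)
   = \sum_(s in [set s : m.-tuple _ | [&& gbool s, map red s == t & face i s == u]])
        (w t / (Nc f m t)%:R).
  rewrite big_mkcond [RHS]big_mkcond; apply: eq_bigr => s _; rewrite inE.
  case: (eqVneq (map_tuple red s) t) => [<-|ne] /=.
    rewrite eqxx /zlift; case: (face i s == u :> seq _); case: (gbool s) => //.
  have -> : (map red s == t) = false.
    by apply/negbTE; apply: contra ne => /eqP e; apply/eqP; apply: val_inj.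
  by rewrite andbF.
rewrite E1 sumr_const.
case: (eqVneq (w t) 0) => [->|wt0]; first by rewrite !mul0r mul0rn; case: ifP; rewrite ?mul0r.
have gt : is_good_flag t by case: (sw t wt0) => [m0|//]; exfalso; move/eqP: m0 im => m0; rewrite m0.
have Nt0 : (0 < Nc f m t)%N by apply: Nc_pos; rewrite ?size_tuple.
case: ifP => [/eqP ft|ft].
  have e := orbit_count fs fJ im gu ft.
  have C0 : (0 < Cc f m i t u)%N by move: Nt0; rewrite e muln_gt0 => /andP [].
  rewrite -/(Cc f m i t u) e natrM invfM -[_ *+ Cc f m i t u]mulr_natr.
  by rewrite -!mulrA mulVf ?mulr1 // natK0.
rewrite mul0r.
have -> : #|[set s : m.-tuple _ | [&& gbool s, map red s == t & face i s == u]]| = 0%N.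
  apply/eqP; rewrite cards_eq0; apply/eqP/setP => s; rewrite !inE.
  apply/negP => /and3P [_ /eqP rs /eqP fsu]; move/negP: ft; apply.
  by rewrite -rs face_map fsu.
by rewrite mulr0n.
Qed.


Lemma zlift_cycle (R S : finComPzRingType) (f : {rmorphism R -> S}) n (K : fieldType) m
    (w : m.-tuple {set 'cV[S]_n} -> K) :
  [pchar K] =i pred0 ->
  (forall y : S, exists x : R, f x = y) -> (forall x : R, f x = 0 -> in_jacobson x) ->
  is_cycle w -> is_cycle (zlift f w).
Proof.
move=> c0 fs fJ [sw bw]; split.
  move=> s; rewrite /zlift; case: ifP => [/pbP gs _|_]; [by right | by rewrite eqxx].
move=> u; rewrite /bd exchange_big /=.
case: (boolP (gbool u)) => [/pbP gu|ngu]; last first.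
  rewrite big1 // => i _; rewrite big1 // => s _; case: ifP => // /eqP fsu.
  rewrite /zlift; case: ifP => [/pbP gs|_]; last by rewrite mulr0.
  by move/negP: ngu; case; apply/pbP; rewrite -fsu; apply: face_good.
set red := @reduce R S f n.
transitivity ((\sum_(i < m) \sum_(t : m.-tuple {set 'cV[S]_n})
     (if face i t == map red u :> seq _ then (-1) ^+ i * w t else 0))
     / (Nc f m.-1 (map red u))%:R).
  rewrite mulr_suml; apply: eq_bigr => i _.
  have -> : \sum_(s : m.-tuple {set 'cV[R]_n}) (if face i s == u :> seq _ then (-1) ^+ i * zlift f w s else 0)
     = (-1) ^+ i * \sum_(s : m.-tuple {set 'cV[R]_n}) (if face i s == u :> seq _ then zlift f w s else 0).
    by rewrite mulr_sumr; apply: eq_bigr => s _; case: ifP; rewrite ?mulr0.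
  rewrite core_sum // mulrA; congr (_ * _).
  by rewrite mulr_sumr; apply: eq_bigr => t _; case: ifP; rewrite ?mulr0.
have := bw (map_tuple red u); rewrite /bd exchange_big /= => ->.
by rewrite mul0r.
Qed.

Unset Implicit Arguments.


Theorem theoremF (R S : finComPzRingType) (f : {rmorphism R -> S})
    (K : fieldType) (n : nat) :
  (0 < n)%N ->
  [pchar K] =i pred0 ->
  (forall y : S, exists x : R, f x = y) ->
  (forall x : R, f x = 0 -> in_jacobson x) ->
  let Gamma (g : 'M[R]_n) := invertible g /\ map_mx f g = 1%:M in
  let invariant (z : n.-1.-tuple {set 'cV[R]_n} -> K) :=
    forall g, Gamma g -> is_boundary (fun t => push (act g) z t - z t) in
  (forall g : 'M[R]_n, invertible g ->
     forall (z : n.-1.-tuple {set 'cV[R]_n} -> K) t,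
       push (@reduce R S f n) (push (act g) z) t
       = push (act (map_mx f g)) (push (@reduce R S f n) z) t) /\
  (forall z : n.-1.-tuple {set 'cV[R]_n} -> K,
     is_cycle z -> invariant z ->
     is_boundary (push (@reduce R S f n) z) -> is_boundary z) /\
  (forall w : n.-1.-tuple {set 'cV[S]_n} -> K, is_cycle w ->
     exists z : n.-1.-tuple {set 'cV[R]_n} -> K,
       is_cycle z /\ invariant z /\
       is_boundary (fun t => push (@reduce R S f n) z t - w t)).
Proof.
move=> n0 c0 fs fJ Gamma invariant.
set red := @reduce R S f n.
split; [|split].
- move=> g ig z t; rewrite !push_comp; apply: push_ext => A /=.
  by rewrite /red reduce_act.
- move=> z [sz _] invz bz.
  have rz := bnd0 n0 bz.
  have invg : forall g, Gamma g -> forall s, z (map_tuple (act g) s) = z s.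
    move=> g [ig fg] s; have := bnd0 n0 (invz g (conj ig fg)) (map_tuple (act g) s).
    rewrite push_inj; last by move=> A B; apply: act_injS.
    by move/eqP; rewrite subr_eq0 => /eqP.
  apply: zero_bnd => s.
  case: (eqVneq (z s) 0) => // zs0; exfalso.
  have gs := supp_good sz zs0.
  have := rz (map_tuple red s); rewrite /push.
  rewrite (eq_bigr (fun s' : n.-1.-tuple {set 'cV[R]_n} => if gbool s' then z s else 0)); last first.
    move=> s' /eqP e; case: ifP => [/pbP gs'|/pbP ngs'].
      have [g [ig [fg gss]]] := trans_good fs fJ gs gs' (esym e).
      have -> : s' = map_tuple (act g) s by apply: val_inj.
      exact: invg.
    by apply/eqP; apply: contraT => /(supp_good sz).
  rewrite -big_mkcondr /=.
  rewrite (eq_bigl (fun s' => s' \in [set s0 : n.-1.-tuple _ | gbool s0 && (map red s0 == map red s)])); last first.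
    by move=> s'; rewrite inE andbC.
  rewrite sumr_const -mulr_natr => /eqP; rewrite mulf_eq0 (negbTE zs0) /=.
  apply/negP; apply: natK0 => //; apply/card_gt0P; exists s; rewrite inE eqxx andbT.
  exact/pbP.
- move=> w cw; exists (zlift f w); split; first exact: zlift_cycle.
  split.
    move=> g [ig fg]; apply: zero_bnd => t; apply/eqP; rewrite subr_eq0; apply/eqP.
    case: (ig) => gi [ggi gig].
    have fgi : map_mx f gi = 1%:M.
      by rewrite -[LHS]mulmx1 -fg -map_mxM gig map_mx1.
    have igi : invertible gi by exists g; split.
    pose s0 := map_tuple (act gi) t.
    have ts0 : t = map_tuple (act g) s0.
      by apply: val_inj; rewrite /= -map_comp -[LHS]map_id; apply: eq_map => A /=; rewrite act_inv.
    rewrite ts0 push_inj; last by move=> A B; apply: act_injS.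
    have rs : map red s0 = map red (map_tuple (act g) s0) by rewrite /= /red (@red_act _ _ f n g _ fg).
    have rs' : map_tuple red s0 = map_tuple red (map_tuple (act g) s0) by apply: val_inj.
    have gb : gbool s0 = gbool (map_tuple (act g) s0).
      apply/pbP/pbP => /= h; first exact: act_good.
      have e : map (act gi) (map (act g) s0) = val s0.
        by rewrite -map_comp -[RHS]map_id; apply: eq_map => A /=; rewrite (act_inv _ gig).
      by move: (act_good igi h); rewrite e.
    by rewrite /zlift rs rs' gb.
  apply: zero_bnd => t; apply/eqP; rewrite subr_eq0; apply/eqP.
  rewrite /push.
  rewrite (eq_bigr (fun s : n.-1.-tuple {set 'cV[R]_n} => if gbool s then w t / (Nc f n.-1 t)%:R else 0)); last first.
    move=> s /eqP e; rewrite /zlift; have -> : map_tuple red s = t by apply: val_inj.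
    by rewrite e.
  rewrite -big_mkcondr /=.
  rewrite (eq_bigl (fun s => s \in [set s0 : n.-1.-tuple _ | gbool s0 && (map red s0 == t)])); last first.
    by move=> s; rewrite inE andbC.
  rewrite sumr_const -/(Nc f n.-1 t).
  case: (posnP (Nc f n.-1 t)) => [N0|N0].
    rewrite N0 mulr0n; apply/esym/eqP; apply: contraT => wt.
    have := Nc_pos fs fJ (size_tuple t) (supp_good (proj1 cw) wt); by rewrite N0.
  by rewrite -[_ *+ Nc f n.-1 t]mulr_natr divfK // natK0.
Qed.
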